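(* Let $\mathcal{M}_{\mathbb{P}}=(\mathcal{M},\mathbb{P})$ be an uncertain parametric MDP, $\varphi$ a specification with comparison operator $\le$, threshold $\lambda$ and associated solution function $\mathrm{sol}_{\mathcal{M}}$, and $\mathcal{U}_N$ a set of $N\ge1$ parameter instantiations sampled independently from $\mathbb{P}$. Let $\mathcal{U}_{N_\varphi}=\{u\in\mathcal{U}_N:\mathrm{sol}_{\mathcal{M}}(u)\le\lambda\}$ be the satisfying samples, $N_{\neg\varphi}=N-|\mathcal{U}_{N_\varphi}|$ the number of violating samples, and $\tau^+=\max_{u\in\mathcal{U}_{N_\varphi}}\mathrm{sol}_{\mathcal{M}}(u)$. Fix a confidence probability $\beta\in(0,1)$. Define $t^*(N)=0$, and for $k=0,\dots,N-1$ let $t^*(k)$ be the solution $t$ of \[\frac{1-\beta}{N}=\sum_{i=0}^{k}\binom{N}{i}(1-t)^i t^{N-i}.\] Then \[\mathbb{P}^N\Big\{\Pr\{u\in\mathcal{V}_{\mathcal{M}}\mid \mathrm{sol}_{\mathcal{M}}(u)\le\tau^+\}\ \ge\ t^*(N_{\neg\varphi})\Big\}\ \ge\ \beta,\] where the inner probability is with respect to $u$ drawn from $\mathbb{P}$.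
   Context: A parametric MDP is $\mathcal{M}=(S,\mathit{Act},s_I,V,\mathcal{P})$ with finite states and actions, initial state, finite parameter set $V$ and transition function $\mathcal{P}:S\times\mathit{Act}\times S\to\mathbb{Q}[V]$. Instantiations $u:V\to\mathbb{R}$ form the parameter space $\mathcal{V}_{\mathcal{M}}$; $\mathcal{M}[u]$ is the instantiated MDP, assumed well-defined and graph-preserving. An uncertain pMDP is $(\mathcal{M},\mathbb{P})$ with $\mathbb{P}$ a probability distribution on $\mathcal{V}_{\mathcal{M}}$. A specification $\varphi$ with operator $\le$ consists of a measure on MDPs (e.g. maximal reachability probability, expected reward) and a threshold $\lambda$; the solution function $\mathrm{sol}_{\mathcal{M}}:\mathcal{V}_{\mathcal{M}}\to\mathbb{R}$ maps $u$ to the value of the measure on $\mathcal{M}[u]$ (assumed measurable), and $\mathcal{M}[u]\models\varphi$ iff $\mathrm{sol}_{\mathcal{M}}(u)\le\lambda$. $\mathbb{P}^N$ is the $N$-fold product measure governing $\mathcal{U}_N$. (When $N_{\neg\varphi}=N$ the set $\mathcal{U}_{N_\varphi}$ is empty and the bound $t^*(N)=0$ holds trivially.) *)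

(* Defs.v *)
From HB Require Import structures.
From mathcomp Require Import all_boot all_order all_algebra.
From mathcomp Require Import all_classical all_reals all_analysis.
Set Implicit Arguments. Unset Strict Implicit. Unset Printing Implicit Defensive.
Import Order.TTheory GRing.Theory Num.Theory.
Local Open Scope classical_set_scope.
Local Open Scope ring_scope.

(* X : 'I_N -> Omega -> T is a sample of N parameter instantiations drawn
   independently from P, defined on the probability space (Omega, Q):
   each X i is measurable and for every measurable family (A i)_i,
   Q (X_0 \in A_0 /\ ... /\ X_{N-1} \in A_{N-1}) = prod_i P (A i).
   (Equivalently, the joint law of (X_0,...,X_{N-1}) is the N-fold
   product measure P^N.) *)
Definition iid_sample (R : realType) (dO dT : measure_display)
  (Omega : measurableType dO) (T : measurableType dT)
  (Q : probability Omega R) (P : probability T R) (N : nat)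
  (X : 'I_N -> Omega -> T) : Prop :=
  (forall i, measurable_fun setT (X i)) /\
  (forall A : 'I_N -> set T, (forall i, measurable (A i)) ->
     Q (\bigcap_(i in [set: 'I_N]) (X i @^-1` A i)) =
     \big[*%E/1%E]_(i < N) P (A i)).

Definition sat_idx (R : realType) (T : Type) (N : nat) (sol : T -> R)
  (lambda : R) (s : 'I_N -> T) : {set 'I_N} :=
  [set i : 'I_N | sol (s i) <= lambda].

Definition N_viol (R : realType) (T : Type) (N : nat) (sol : T -> R)
  (lambda : R) (s : 'I_N -> T) : nat :=
  (N - #|sat_idx sol lambda s|)%N.

(* tau^+ = max of sol over the satisfying samples (in the extended reals;
   -oo if there are none) *)
Definition tau_plus (R : realType) (T : Type) (N : nat) (sol : T -> R)
  (lambda : R) (s : 'I_N -> T) : \bar R :=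
  \big[maxe/-oo%E]_(i in sat_idx sol lambda s) (sol (s i))%:E.

Definition tstar_eq (R : realType) (N : nat) (beta : R) (k : nat) (t : R) : Prop :=
  (1 - beta) / N%:R =
  \sum_(i < k.+1) ('C(N, i))%:R * (1 - t) ^+ i * t ^+ (N - i).

(* Main.v *)
Require Import Defs.
From HB Require Import structures.
From mathcomp Require Import all_boot all_order all_algebra.
From mathcomp Require Import all_classical all_reals all_analysis.
From mathcomp Require Import measurable_realfun ring lra zify.
Import Order.TTheory GRing.Theory Num.Theory.
Local Open Scope classical_set_scope.
Local Open Scope ring_scope.

Section Binom.
Variable R : realFieldType.

Definition Btail (n j : nat) (p : R) : R :=
  \sum_(m < n.+1) ((j <= m)%N)%:R * ('C(n, m))%:R * p ^+ m * (1 - p) ^+ (n - m).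

Lemma Btail0 n p : Btail n 0 p = 1.
Proof.
have -> : (1 : R) = (1 - p + p) ^+ n by rewrite subrK expr1n.
rewrite /Btail exprDn; apply: eq_bigr => i _; rewrite -mulr_natl /=; ring.
Qed.

Lemma Btail_step n j p :
  Btail n.+1 j.+1 p = p * Btail n j p + (1 - p) * Btail n j.+1 p.
Proof.
rewrite /Btail big_ord_recl /= mul0r mul0r mul0r add0r.
under eq_bigr => i _ do rewrite /bump leq0n add1n binS natrD.
under eq_bigr => i _ do rewrite mulrDr mulrDl mulrDl.
rewrite big_split /= addrC; congr (_ + _).
  rewrite mulr_sumr; apply: eq_bigr => i _.
  rewrite subSS exprS; ring.
rewrite [RHS]mulr_sumr [RHS]big_ord_recl [LHS]big_ord_recr /=.
rewrite bin_small // mul0r !mulr0 !mul0r addr0 mulr0 add0r.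
apply: eq_bigr => i _; rewrite /= /bump leq0n add1n subSS.
have hi : (i < n)%N := ltn_ord i.
rewrite -(subnSK hi) [(1 - p) ^+ (_).+1]exprS; ring.
Qed.

Lemma Btail_anti n j p : 0 <= p <= 1 -> Btail n j.+1 p <= Btail n j p.
Proof.
move=> /andP[p0 p1]; apply: ler_sum => i _.
have h1 : 0 <= 1 - p by rewrite subr_ge0.
rewrite -!mulrA; apply: ler_wpM2r.
  by rewrite mulr_ge0 ?exprn_ge0 // mulr_ge0 ?exprn_ge0.
rewrite ler_nat; case: (ltnP j i) => h //; by rewrite (ltnW h).
Qed.

Lemma Btail0n j p : Btail 0 j p = ((j <= 0)%N)%:R.
Proof. by rewrite /Btail big_ord1 /= !expr0 !mulr1. Qed.

Lemma Btail_mono n : forall j p q, 0 <= p -> p <= q -> q <= 1 ->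
  Btail n j p <= Btail n j q.
Proof.
elim: n => [|n IH] j p q p0 pq q1; first by rewrite !Btail0n.
case: j => [|j]; first by rewrite !Btail0.
rewrite !Btail_step.
have p1 : p <= 1 by apply: le_trans q1.
have q0 : 0 <= q by apply: le_trans pq.
have h1 := IH j p q p0 pq q1.
have h2 := IH j.+1 p q p0 pq q1.
have h3 : Btail n j.+1 q <= Btail n j q by apply: Btail_anti; rewrite q0 q1.
set a := Btail n j p in h1 *; set a' := Btail n j q in h1 h3 *.
set b := Btail n j.+1 p in h2 *; set b' := Btail n j.+1 q in h2 h3 *.
have e : q * a' + (1 - q) * b' - (p * a + (1 - p) * b) =
  p * (a' - a) + (1 - p) * (b' - b) + (q - p) * (a' - b') by ring.
rewrite -subr_ge0 e; apply: addr_ge0; first apply: addr_ge0;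
  apply: mulr_ge0; rewrite ?subr_ge0 //.
Qed.

Lemma Btail_tstar (N k : nat) (t : R) : (k <= N)%N ->
  \sum_(i < k.+1) ('C(N, i))%:R * (1 - t) ^+ i * t ^+ (N - i) = Btail N (N - k) t.
Proof.
move=> kN; rewrite /Btail (big_ord_widen N.+1 (fun i => ('C(N, i))%:R * (1 - t) ^+ i * t ^+ (N - i))) //.
rewrite big_mkcond /= (reindex_inj rev_ord_inj) /=.
apply: eq_bigr => i _; rewrite subSS.
have iN : (i <= N)%N by rewrite -ltnS ltn_ord.
rewrite bin_sub // subKn //.
have -> : ((N - i < k.+1)%N) = (N - k <= i)%N by apply/idP/idP; lia.
case: (N - k <= i)%N; rewrite ?mul1r ?mul0r //; ring.
Qed.

End Binom.
Arguments Btail {R}.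

Lemma setsum_Btail (R : realFieldType) N j (p : R) :
  \sum_(A : {set 'I_N} | (j <= #|A|)%N) p ^+ #|A| * (1 - p) ^+ (N - #|A|) = @Btail R N j p.
Proof.
rewrite big_mkcond /=.
rewrite (partition_big (fun A : {set 'I_N} => (inord #|A| : 'I_N.+1)) predT) //=.
rewrite /Btail; apply: eq_bigr => m _.
have cardN (A : {set 'I_N}) : (#|A| <= N)%N by rewrite -[X in (_ <= X)%N](card_ord N) max_card.
rewrite (eq_bigr (fun _ => ((j <= m)%N)%:R * p ^+ m * (1 - p) ^+ (N - m))); last first.
  move=> A /eqP <-; rewrite inordK ?ltnS ?cardN //.
  by case: (j <= #|A|)%N; rewrite ?mul1r ?mul0r.
rewrite sumr_const.
have -> : #|[pred A : {set 'I_N} | inord #|A| == m]| = 'C(N, m).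
  have e := card_draws 'I_N m; rewrite card_ord in e; rewrite -e; apply: eq_card => A.
  rewrite !inE; apply/eqP/eqP => [<-|H]; first by rewrite inordK ?ltnS ?cardN.
  by apply: val_inj; rewrite /= inordK ?ltnS ?cardN.
by rewrite -mulr_natr; ring.
Qed.
Section PIT.
Context (R : realType) (dT : measure_display) (T : measurableType dT)
  (P : probability T R) (sol : T -> R) (msol : measurable_fun setT sol).

Definition Gr (y : R) : R := fine (P [set u | sol u <= y]).

Lemma mle y : measurable [set u | sol u <= y].
Proof.
have -> : [set u | sol u <= y] = sol @^-1` `]-oo, y].
  by apply/seteqP; split => u /=; rewrite in_itv.
by rewrite -[X in measurable X]setTI; apply: msol.
Qed.

Lemma GrE y : P [set u | sol u <= y] = (Gr y)%:E.
Proof. by rewrite fineK // (fin_num_measure P _ (mle y)). Qed.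

Lemma Gr_nd y z : y <= z -> Gr y <= Gr z.
Proof.
move=> yz; rewrite -lee_fin -!GrE; apply: le_measure; rewrite ?inE; try exact: mle.
by move=> u /= h; apply: le_trans yz.
Qed.

Lemma Gr_ge0 y : 0 <= Gr y.
Proof. by rewrite -lee_fin -GrE. Qed.

Lemma Gr_meas : measurable_fun setT Gr.
Proof. by apply: nondecreasing_measurable => // y z; apply: Gr_nd. Qed.

Lemma PIT_seq (t : R) (y_ : nat -> R) :
  {homo y_ : n m / (n <= m)%N >-> n <= m} ->
  (forall n, Gr (y_ n) < t) -> (forall y, Gr y < t -> exists n, y <= y_ n) ->
  (P [set u | (Gr (sol u) < t)%R] <= t%:E)%E.
Proof.
move=> ndy ylt cover.
have -> : [set u | Gr (sol u) < t] = \bigcup_n [set u | sol u <= y_ n].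
  apply/seteqP; split => u /=.
    by move=> /cover [n hn]; exists n.
  by move=> [n _ hn]; apply: le_lt_trans (ylt n); apply: Gr_nd.
have cv := @nondecreasing_cvg_mu _ _ _ P (fun n => [set u | sol u <= y_ n])
  (fun n => mle (y_ n)) (bigcup_measurable (fun n _ => mle (y_ n))) _.
have {}cv : (P \o (fun n => [set u | sol u <= y_ n])) @ \oo -->
   P (\bigcup_n [set u | sol u <= y_ n]).
  apply: cv => n m nm; apply/subsetPset => u /= h; apply: le_trans h _; exact: ndy.
rewrite -(cvg_lim _ cv) //; apply: lime_le; first by apply/cvg_ex; eexists; exact: cv.
by near=> n; rewrite /= GrE lee_fin; apply/ltW.
Unshelve. all: by end_near.
Qed.


Lemma PIT (t : R) : 0 <= t -> (P [set u | (Gr (sol u) < t)%R] <= t%:E)%E.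
Proof.
move=> t0.
pose L := [set y | Gr y < t].
have [[y0 Hy0]|Hn] := pselect (exists y, Gr y < t); last first.
  have -> : [set u | (Gr (sol u) < t)%R] = set0.
    by apply/seteqP; split => u //= h; apply: Hn; exists (sol u).
  by rewrite measure0 lee_fin.
have [hub|hnub] := pselect (has_ubound L); last first.
  apply: (@PIT_seq t (fun n => n%:R)).
  - by move=> n m nm; rewrite ler_nat.
  - move=> n; have : ~ ubound L n%:R by move=> h; apply: hnub; exists n%:R.
    move=> /existsNP [y /not_implyP [Ly /negP]]; rewrite -ltNge => ny.
    by apply: le_lt_trans Ly; apply: Gr_nd; apply: ltW.
  - move=> y _; exists (Num.bound `|y|).
    apply: le_trans (ler_norm y) _; apply: ltW; apply: archi_boundP.
    exact: normr_ge0.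
have hs : has_sup L by split => //; exists y0.
pose s := sup L.
have [Gs|Gs] := ltP (Gr s) t.
  apply: (@PIT_seq t (fun _ => s)) => //.
  move=> y Ly; exists 0%N; exact: sup_upper_bound.
apply: (@PIT_seq t (fun n => s - (n.+1%:R)^-1)).
- move=> n m nm; rewrite lerD2l lerN2 lef_pV2 ?posrE ?ltr0Sn // ler_nat ltnS //.
- move=> n; have [e Le He] : exists2 e, L e & s - n.+1%:R^-1 < e.
    by apply: sup_adherent hs; rewrite invr_gt0 ltr0Sn.
  by apply: le_lt_trans Le; apply: Gr_nd; apply: ltW.
- move=> y Ly.
  have ys : y <= s by exact: sup_upper_bound.
  have ys' : y < s.
    rewrite lt_neqAle ys andbT; apply/eqP => ey.
    by move: Ly; rewrite /= ey ltNge Gs.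
  have sy : 0 < s - y by rewrite subr_gt0.
  exists (Num.bound ((s - y)^-1)).
  set n := Num.bound _.
  have h1 : (s - y)^-1 < n%:R by apply: archi_boundP; rewrite invr_ge0 ltW.
  have h2 : (n.+1%:R)^-1 < s - y.
    rewrite -(invrK (s - y)) ltf_pV2 ?posrE ?ltr0Sn ?invr_gt0 //.
    by apply: lt_trans h1 _; rewrite ltr_nat.
  rewrite lerBrDr addrC -lerBrDr; apply: ltW; exact: h2.
Qed.

End PIT.
Lemma in_bigsetU_seq (I : eqType) (U : Type) (r : seq I) (P : pred I) (F : I -> set U) x :
  (\big[setU/set0]_(i <- r | P i) F i) x <-> exists i, [/\ i \in r, P i & F i x].
Proof.
elim: r => [|a r IH]; rewrite ?big_nil ?big_cons.
  by split => // -[i []]; rewrite in_nil.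
case: ifP => Pa.
  split.
    case => [Fa|/IH [i [ir Pi Fi]]]; first by exists a; rewrite mem_head.
    by exists i; rewrite in_cons ir orbT.
  move=> [i [+ Pi Fi]]; rewrite in_cons => /orP [/eqP ei|ir]; first by left; rewrite -ei.
  by right; apply/IH; exists i.
split.
  by move/IH => [i [ir Pi Fi]]; exists i; rewrite in_cons ir orbT.
move=> [i [+ Pi Fi]]; rewrite in_cons => /orP [/eqP ei|ir].
  by rewrite -ei Pi in Pa.
by apply/IH; exists i.
Qed.

Lemma in_bigsetU (I : finType) (U : Type) (P : pred I) (F : I -> set U) x :
  (\big[setU/set0]_(i | P i) F i) x <-> exists i, P i /\ F i x.
Proof.
rewrite in_bigsetU_seq; split => [[i [_ Pi Fi]]|[i [Pi Fi]]]; first by exists i.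
by exists i; rewrite mem_index_enum.
Qed.

Lemma subadd_fin (R : realType) d (U : measurableType d) (mu : {measure set U -> \bar R})
  (I : finType) (P : pred I) (F : I -> set U) :
  (forall i, P i -> measurable (F i)) ->
  (mu (\big[setU/set0]_(i | P i) F i) <= \sum_(i | P i) mu (F i))%E.
Proof.
move=> mF.
suff : measurable (\big[setU/set0]_(i | P i) F i) /\
  (mu (\big[setU/set0]_(i | P i) F i) <= \sum_(i | P i) mu (F i))%E by case.
apply: (big_rec2 (fun A s => measurable A /\ (mu A <= s)%E)).
  by rewrite measure0.
move=> i A s Pi [mA h]; split; first exact: measurableU (mF i Pi) mA.
apply: le_trans (measureU2 _ (mF i Pi) mA) _.
by rewrite leeD2l.
Qed.

Arguments subadd_fin {R d U} mu {I P F}.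

Theorem lemma2 (R : realType) (dO dT : measure_display)
  (Omega : measurableType dO) (T : measurableType dT)
  (Q : probability Omega R) (P : probability T R)
  (sol : T -> R) (lambda beta : R) (N : nat) (X : 'I_N -> Omega -> T)
  (tstar : nat -> R) :
  measurable_fun setT sol ->
  (0 < N)%N ->
  iid_sample Q P X ->
  0 < beta < 1 ->
  tstar N = 0 ->
  (forall k, (k < N)%N -> 0 <= tstar k <= 1 /\ tstar_eq N beta k (tstar k)) ->
  let E := [set w : Omega |
             ((tstar (N_viol sol lambda (fun i => X i w)))%:E <=
              P [set u : T | ((sol u)%:E <= tau_plus sol lambda (fun i => X i w))%E])%E] in
  measurable E /\ (beta%:E <= Q E)%E.
Proof.
move=> msol N0 [mX iid] /andP[b0 b1] tN ht E.
have mXp i (B : set T) : measurable B -> measurable (X i @^-1` B).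
  by move=> mB; rewrite -[X in measurable X]setTI; apply: mX.
pose G := @Gr R dT T P sol.
have GrE' : forall y, P [set u | sol u <= y] = (G y)%:E := @GrE R dT T P sol msol.
have mle' : forall y, measurable [set u | sol u <= y] := @mle R dT T sol msol.
have Gmeas : measurable_fun setT G := @Gr_meas R dT T P sol msol.
pose Sat w := sat_idx sol lambda (fun i => X i w).
have inSat w i : (i \in Sat w) = (sol (X i w) <= lambda) by rewrite /Sat /sat_idx inE.
have cardN (A : {set 'I_N}) : (#|A| <= N)%N.
  by rewrite -[X in (_ <= X)%N](card_ord N) max_card.
have setle (y : R) : [set u | ((sol u)%:E <= y%:E)%E] = [set u | sol u <= y].
  by apply/seteqP; split => u /=; rewrite lee_fin.
have tau_ub w i : i \in Sat w -> ((sol (X i w))%:E <= tau_plus sol lambda (fun i => X i w))%E.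
  by move=> iS; rewrite /tau_plus; exact: le_bigmax_cond.
have mtau (tau : \bar R) : measurable [set u | ((sol u)%:E <= tau)%E].
  case: tau => [r| |]; first by rewrite setle; exact: mle'.
    by have -> : [set u | ((sol u)%:E <= +oo)%E] = setT by apply/seteqP; split => u //= _; rewrite leey.
  have -> : [set u | ((sol u)%:E <= -oo)%E] = set0 by apply/seteqP; split => u //=; rewrite leeNy_eq.
  exact: measurable0.
have Echar w : E w <-> (Sat w = finset.set0 \/
   exists i, i \in Sat w /\ ((tstar (N - #|Sat w|)%N)%:E <= P [set u | (sol u <= sol (X i w))%R])%E).
  rewrite /E /= /N_viol -/(Sat w); split.
    have [S0|Sn0] := eqVneq (Sat w) finset.set0; first by left.
    move=> h; right.
    have [j jS] := set0Pn _ Sn0.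
    have [i iS ti] := @Order.TotalTheory.eq_bigmax _ _ _ -oo%E j (fun i => i \in Sat w) (fun i => (sol (X i w))%:E) jS (fun i _ => leNye _).
    exists i; split => //; rewrite -setle -ti; exact: h.
  case=> [S0|[i [iS hi]]].
    by rewrite S0 cards0 subn0 tN.
  apply: le_trans hi _; apply: le_measure; rewrite ?inE; [exact: mle'| exact: mtau|].
  by move=> u /= h; apply: le_trans (tau_ub w i iS); rewrite lee_fin.
pose Lam := [set u | sol u <= lambda].
pose SatEq (S : {set 'I_N}) := \bigcap_(i in [set: 'I_N]) (X i @^-1` (if i \in S then Lam else ~` Lam)).
pose FS (S : {set 'I_N}) := if S == finset.set0 then setT else
  \big[setU/set0]_(i in S) (X i @^-1` [set u | ((tstar (N - #|S|)%N)%:E <= P [set v | (sol v <= sol u)%R])%E]).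
have SatEqP S w : SatEq S w <-> Sat w = S.
  split.
    move=> h; apply/setP => i; rewrite inSat.
    have := h i I; case: (i \in S) => /=; first by move=> ->.
    by move=> /negP /negbTE.
  move=> <- i _ /=; rewrite inSat; case: ifP => h // h2; by rewrite /Lam /= h2 in h.
have mFS S : measurable (FS S).
  rewrite /FS; case: ifP => _; first exact: measurableT.
  apply: bigsetU_measurable => i _; apply: mXp.
  have -> : [set u | ((tstar (N - #|S|)%N)%:E <= P [set v | (sol v <= sol u)%R])%E] =
    (G \o sol) @^-1` `[tstar (N - #|S|)%N, +oo[.
    by apply/seteqP; split => u /=; rewrite in_itv /= andbT GrE' lee_fin.
  have mGs : measurable_fun setT (G \o sol) by apply: measurableT_comp.
  rewrite -[X in measurable X]setTI; apply: mGs => //; exact: measurable_itv.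
have mSatEq S : measurable (SatEq S).
  apply: fin_bigcap_measurable; first exact: finite_finset.
  move=> i _; apply: mXp; case: ifP => _; [exact: mle'| apply: measurableC; exact: mle'].
have Eeq : E = \big[setU/set0]_(S : {set 'I_N}) (SatEq S `&` FS S).
  apply/seteqP; split => w.
    move=> /Echar Ew; apply/in_bigsetU; exists (Sat w); split => //; split.
      exact/SatEqP.
    rewrite /FS; case: Ew => [S0|[i [iS hi]]]; first by rewrite S0 eqxx.
    have -> : (Sat w == finset.set0) = false.
      by apply/negbTE/set0Pn; exists i.
    by apply/in_bigsetU; exists i.
  move=> /in_bigsetU [S [_ [/SatEqP eS]]]; rewrite -eS /FS => hF.
  apply/Echar; move: hF; case: ifP => [/eqP S0 _|_ /in_bigsetU [i [iS hi]]]; first by left.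
  by right; exists i.
have mE : measurable E.
  rewrite Eeq; apply: bigsetU_measurable => S _; exact: measurableI.
split => //.
pose Ck k := [set u | (G (sol u) < tstar k)%R].
have mCk k : measurable (Ck k).
  have mGs : measurable_fun setT (G \o sol) by apply: measurableT_comp.
  have -> : Ck k = (G \o sol) @^-1` `]-oo, tstar k[.
    by apply/seteqP; split => u /=; rewrite in_itv.
  rewrite -[X in measurable X]setTI; apply: mGs => //; exact: measurable_itv.
pose pk k := fine (P (Ck k)).
have PCk k : P (Ck k) = (pk k)%:E by rewrite fineK // (fin_num_measure P _ (mCk k)).
have pk0 k : 0 <= pk k by rewrite -lee_fin -PCk.
have pkt k : (k < N)%N -> pk k <= tstar k.
  move=> kN; rewrite -lee_fin -PCk; apply: (@PIT R dT T P sol msol).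
  by have [/andP[]] := ht k kN.
have pk1 k : pk k <= 1 by rewrite -lee_fin -PCk; apply: probability_le1.
pose Cyl k (A : {set 'I_N}) :=
  \bigcap_(i in [set: 'I_N]) (X i @^-1` (if i \in A then Ck k else ~` Ck k)).
have mCyl k A : measurable (Cyl k A).
  apply: fin_bigcap_measurable; first exact: finite_finset.
  move=> i _; apply: mXp; case: ifP => _; [exact: mCk| apply: measurableC; exact: mCk].
have QCyl k A : Q (Cyl k A) = ((pk k) ^+ #|A| * (1 - pk k) ^+ (N - #|A|))%:E.
  rewrite /Cyl iid; last by move=> i; case: ifP => _; [exact: mCk| apply: measurableC; exact: mCk].
  rewrite (eq_bigr (fun i => (if i \in A then pk k else 1 - pk k)%:E)); last first.
    move=> i _; case: ifP => _; first exact: PCk.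
    by rewrite probability_setC // PCk EFinB.
  rewrite prodEFin; congr (_%:E).
  rewrite (bigID (mem A)) /=.
  rewrite (eq_bigr (fun _ => pk k)); last by move=> i ->.
  rewrite [X in _ * X](eq_bigr (fun _ => 1 - pk k)); last by move=> i /negbTE ->.
  rewrite [X in _ * X](eq_bigl (fun i => i \in ~: A)); last by move=> i; rewrite finset.in_setC.
  have cC : #|~: A| = (N - #|A|)%N by have := finset.cardsC A; rewrite card_ord; lia.
  by rewrite !prodr_const cC.
have cover : ~` E `<=` \big[setU/set0]_(k < N)
    \big[setU/set0]_(A : {set 'I_N} | (N - k <= #|A|)%N) Cyl k A.
  move=> w nEw.
  have nS : Sat w != finset.set0 by apply/eqP => S0; apply: nEw; apply/Echar; left.
  have hk : (N - #|Sat w| < N)%N.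
    move: nS; rewrite -card_gt0 => c0; have := cardN (Sat w); lia.
  apply/in_bigsetU; exists (Ordinal hk); split => //.
  apply/in_bigsetU; exists (finset.finset (fun i : 'I_N => X i w \in Ck (N - #|Sat w|)%N)); split.
    rewrite /= subKn ?cardN //; apply: subset_leq_card; apply/fintype.subsetP => i iS.
    rewrite inE; apply: mem_set; rewrite /Ck /=.
    have : ~ ((tstar (N - #|Sat w|)%N)%:E <= P [set u | (sol u <= sol (X i w))%R])%E.
      by move=> h; apply: nEw; apply/Echar; right; exists i.
    by move/negP; rewrite -ltNge GrE' lte_fin.
  move=> i _ /=; case: (boolP (X i w \in Ck (N - #|Sat w|)%N)) => h; rewrite inE; [rewrite h | rewrite (negbTE h)].
    exact: set_mem.
  by move=> c; move: h; rewrite (mem_set c).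
have bk k : (k < N)%N ->
    (\sum_(A : {set 'I_N} | (N - k <= #|A|)%N) Q (Cyl k A) <= ((1 - beta) / N%:R)%:E)%E.
  move=> kN.
  rewrite (eq_bigr _ (fun A _ => QCyl k A)) sumEFin setsum_Btail lee_fin.
  have [/andP[t0 t1] teq] := ht k kN.
  rewrite /tstar_eq in teq; rewrite teq Btail_tstar; last exact: ltnW.
  apply: Btail_mono; [exact: pk0 | exact: pkt | exact: t1].
pose U := \big[setU/set0]_(k < N) \big[setU/set0]_(A : {set 'I_N} | (N - k <= #|A|)%N) Cyl k A.
have mU : measurable U.
  by apply: bigsetU_measurable => k _; apply: bigsetU_measurable => A _; exact: mCyl.
have h1 : (Q (~` E) <= Q U)%E.
  by apply: le_measure; rewrite ?inE; [exact: measurableC | exact: mU | exact: cover].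
have h2 : (Q U <= \sum_(k < N) \sum_(A : {set 'I_N} | (N - k <= #|A|)%N) Q (Cyl k A))%E.
  apply: le_trans (subadd_fin Q _) _.
    by move=> k _; apply: bigsetU_measurable => A _; exact: mCyl.
  apply: lee_sum => k _; exact: (subadd_fin Q (fun A _ => mCyl k A)).
have h3 : (\sum_(k < N) \sum_(A : {set 'I_N} | (N - k <= #|A|)%N) Q (Cyl k A) <=
    \sum_(k < N) ((1 - beta) / N%:R)%:E)%E.
  by apply: lee_sum => k _; exact: bk k (ltn_ord k).
have h4 : (\sum_(k < N) ((1 - beta) / N%:R)%:E = (1 - beta)%:E)%E.
  rewrite sumEFin sumr_const card_ord; congr (_%:E).
  have hN : (N%:R : R) != 0 by rewrite pnatr_eq0 -lt0n N0.
  by rewrite -mulr_natr; field.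
have QnE : (Q (~` E) <= (1 - beta)%:E)%E.
  by rewrite -h4; apply: le_trans h1 (le_trans h2 h3).
move: QnE; rewrite probability_setC //.
rewrite -(fineK (fin_num_measure Q E mE)) -EFinB !lee_fin; lra.
Qed.
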